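(* Let $R$ be a commutative ring with identity, $\mathcal S$ an associative $R$-algebra with identity, $\mathcal M$ a $2$-torsion free bimodule over $\mathcal S$, $\delta$ a derivation on $\mathcal S$ and $f:\mathcal S\to\mathcal M$ a bimodule homomorphism over $\mathcal S$. If $D:\mathcal S\to\mathcal M$ is a Jordan $(\delta,f)$-derivation on $\mathcal M$, then $(D(xy)-D(x)y-f(x)\delta(y))(xy-yx)=0$ for all $x,y\in\mathcal S$.
   Context: A derivation on $\mathcal S$ is an additive map $\delta$ with $\delta(ab)=\delta(a)b+a\delta(b)$. An additive map $D:\mathcal S\to\mathcal M$ is a Jordan $(\delta,f)$-derivation if $D(x^2)=D(x)x+f(x)\delta(x)$ for all $x\in\mathcal S$. $\mathcal M$ is $2$-torsion free if $2m=0$ implies $m=0$. *)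

(* Defs.v *)
From HB Require Import structures.
From mathcomp Require Import all_boot all_order all_algebra.
Set Implicit Arguments. Unset Strict Implicit. Unset Printing Implicit Defensive.
Import GRing.Theory.
Local Open Scope ring_scope.

Definition is_bimodule (S : ringType) (M : zmodType)
  (la : S -> M -> M) (ra : M -> S -> M) : Prop :=
  (forall a m n, la a (m + n) = la a m + la a n) /\
      (forall a b m, la (a + b) m = la a m + la b m) /\
      (forall m a b, ra m (a + b) = ra m a + ra m b) /\
      (forall m n a, ra (m + n) a = ra m a + ra n a) /\
      (forall a b m, la (a * b) m = la a (la b m)) /\
      (forall m a b, ra m (a * b) = ra (ra m a) b) /\
      (forall a m b, ra (la a m) b = la a (ra m b)) /\
      (forall m, la 1 m = m) /\ (forall m, ra m 1 = m).

Definition two_torsion_free (M : zmodType) : Prop :=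
  forall m : M, m *+ 2 = 0 -> m = 0.

Definition additive_map (U V : zmodType) (g : U -> V) : Prop :=
  forall x y, g (x + y) = g x + g y.

Definition is_derivation (S : ringType) (d : S -> S) : Prop :=
  additive_map d /\ forall a b, d (a * b) = d a * b + a * d b.

Definition is_bimodule_hom (S : ringType) (M : zmodType)
  (la : S -> M -> M) (ra : M -> S -> M) (f : S -> M) : Prop :=
  [/\ additive_map f, (forall a x, f (a * x) = la a (f x))
    & (forall x a, f (x * a) = ra (f x) a)].

Definition is_jordan_der (S : ringType) (M : zmodType)
  (ra : M -> S -> M) (d : S -> S) (f D : S -> M) : Prop :=
  additive_map D /\ forall x, D (x * x) = ra (D x) x + ra (f x) (d x).

(* Main.v *)
Require Import Defs.
From HB Require Import structures.
From mathcomp Require Import all_boot all_order all_algebra ring.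
Import GRing.Theory.
Local Open Scope ring_scope.

Section SqZ.
Variable V : zmodType.
Definition sqz : Type := (V * int)%type.
HB.instance Definition _ := GRing.Zmodule.on sqz.
Definition sqz_mul (a b : sqz) : sqz := (a.1 *~ b.2 + b.1 *~ a.2, a.2 * b.2).
Definition sqz_one : sqz := (0, 1).
Lemma sqz_mulA : associative sqz_mul.
Proof.
move=> [a1 a2] [b1 b2] [c1 c2]; rewrite /sqz_mul /=; congr pair; last by rewrite mulrA.
rewrite !mulrzDl -!mulrzA [c2 * a2]mulrC [b2 * a2]mulrC.
exact: addrA.
Qed.
Lemma sqz_mulC : commutative sqz_mul.
Proof. by move=> [a1 a2] [b1 b2]; rewrite /sqz_mul /= addrC mulrC. Qed.
Lemma sqz_mul1 : left_id sqz_one sqz_mul.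
Proof. by move=> [a1 a2]; rewrite /sqz_mul /= mul0rz add0r mulr1z mul1r. Qed.
Lemma sqz_mulDl : left_distributive sqz_mul +%R.
Proof.
move=> [a1 a2] [b1 b2] [c1 c2]; rewrite /sqz_mul /=.
congr pair; last by rewrite mulrDl.
rewrite mulrzDl mulrzDr -!addrA; congr (_ + _); rewrite addrCA.
done.
Qed.
Lemma sqz_one_neq0 : sqz_one != 0.
Proof. by apply/eqP => /(congr1 snd) /eqP; rewrite oner_eq0. Qed.
HB.instance Definition _ := GRing.Zmodule_isComNzRing.Build sqz
  sqz_mulA sqz_mulC sqz_mul1 sqz_mulDl sqz_one_neq0.
Definition inj (m : V) : sqz := (m, 0).
Lemma injD a b : inj (a + b) = inj a + inj b. Proof. by rewrite /inj; congr pair; rewrite addr0. Qed.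
Lemma injN a : inj (- a) = - inj a. Proof. by rewrite /inj; congr pair; rewrite oppr0. Qed.
Lemma inj0 : inj 0 = 0. Proof. by []. Qed.
Lemma injMn a n : inj (a *+ n) = inj a *+ n.
Proof. by elim: n => [|n IH]; rewrite ?mulr0n // !mulrS injD IH. Qed.
Lemma inj_inj : injective inj. Proof. by move=> a b [->]. Qed.
End SqZ.

Ltac zm := apply: inj_inj; rewrite ?(injD, injN, injMn, inj0); ring.


Theorem lemma3p7 (R : comNzRingType) (S : algType R) (M : zmodType)
  (la : S -> M -> M) (ra : M -> S -> M) (d : S -> S) (f D : S -> M) :
  is_bimodule la ra ->
  two_torsion_free M ->
  is_derivation d ->
  is_bimodule_hom la ra f ->
  is_jordan_der ra d f D ->
  forall x y : S,
    ra (D (x * y) - ra (D x) y - ra (f x) (d y)) (x * y - y * x) = 0.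
Proof.
move=> [laD [laDl [raDr [raDl [laM [raM [lra [la1 ra1]]]]]]]] tf [dD dM] [fD fL fR] [DD J].
have ra0r m : ra m 0 = 0 by apply: (addrI (ra m 0)); rewrite -raDr !addr0.
have ra0l a : ra 0 a = 0 by apply: (addrI (ra 0 a)); rewrite -raDl !addr0.
have raNr m a : ra m (- a) = - ra m a.
  by apply: (addrI (ra m a)); rewrite -raDr !subrr ra0r.
have raNl m a : ra (- m) a = - ra m a.
  by apply: (addrI (ra m a)); rewrite -raDl !subrr ra0l.
have raA m a b : ra (ra m a) b = ra m (a * b) by rewrite raM.
have d0 : d 0 = 0 by apply: (addrI (d 0)); rewrite -dD !addr0.
have dN a : d (- a) = - d a by apply: (addrI (d a)); rewrite -dD !subrr d0.
have D0 : D 0 = 0 by apply: (addrI (D 0)); rewrite -DD !addr0.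
have DN a : D (- a) = - D a by apply: (addrI (D a)); rewrite -DD !subrr D0.
have [c fE] : exists c, forall a, f a = ra c a.
  by exists (f 1) => a; rewrite -{1}[a]mul1r fR.
have J' a : D (a * a) = ra (D a) a + ra c (a * d a) by rewrite J fE raA.
clear J fD fL fR laD laDl laM lra la1 ra1.
have Lin a b : D (a * b) + D (b * a) = ra (D a) b + ra (D b) a + ra c (a * d b) + ra c (b * d a).
  have H := J' (a + b).
  rewrite mulrDl !mulrDr !DD (J' a) (J' b) in H.
  rewrite ?(fE, dD, dN, dM, DD, DN, raDr, raDl, raNr, raNl, raA, mulrDl, mulrDr, mulrN, mulNr, mulrA, opprK) in H.
  move/eqP: H; rewrite -subr_eq0 => /eqP H.
  apply/eqP; rewrite -subr_eq0; apply/eqP.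
  rewrite ?(fE, dD, dN, dM, DD, DN, raDr, raDl, raNr, raNl, raA, mulrDl, mulrDr, mulrN, mulNr, mulrA, opprK).
  match type of H with ?e = 0 => transitivity e; [zm | exact H] end.
have T a b : D (a * b * a) = ra (D a) (b * a) + ra c (a * d b * a) + ra c (a * b * d a).
  apply/eqP; rewrite -subr_eq0; apply/eqP; apply: tf.
  have H1 := Lin a (a * b + b * a).
  rewrite [D (a * b + b * a)]DD (Lin a b) in H1.
  have H2 := Lin (a * a) b; rewrite (J' a) in H2.
  rewrite ?(fE, dD, dN, dM, DD, DN, raDr, raDl, raNr, raNl, raA, mulrDl, mulrDr, mulrN, mulNr, mulrA, opprK) in H1.
  rewrite ?(fE, dD, dN, dM, DD, DN, raDr, raDl, raNr, raNl, raA, mulrDl, mulrDr, mulrN, mulNr, mulrA, opprK) in H2.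
  rewrite ?(fE, dD, dN, dM, DD, DN, raDr, raDl, raNr, raNl, raA, mulrDl, mulrDr, mulrN, mulNr, mulrA, opprK).
  move/eqP: H1; rewrite -subr_eq0 => /eqP H1.
  move/eqP: H2; rewrite -subr_eq0 => /eqP H2.
  match type of H1 with ?e1 = 0 => match type of H2 with ?e2 = 0 =>
    transitivity (e1 - e2); [zm | by rewrite H1 H2 subrr] end end.
move=> x y.
have H1 := Lin (x * y) (y * x).
have H2 := T x (y * y). have H3 := T y (x * x).
have H4 := congr1 (fun m => ra m (x * y)) (Lin x y); simpl in H4.
rewrite ?(fE, dD, dN, dM, DD, DN, raDr, raDl, raNr, raNl, raA, mulrDl, mulrDr, mulrN, mulNr, mulrA, opprK) in H1.
rewrite ?(fE, dD, dN, dM, DD, DN, raDr, raDl, raNr, raNl, raA, mulrDl, mulrDr, mulrN, mulNr, mulrA, opprK) in H2.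
rewrite ?(fE, dD, dN, dM, DD, DN, raDr, raDl, raNr, raNl, raA, mulrDl, mulrDr, mulrN, mulNr, mulrA, opprK) in H3.
rewrite ?(fE, dD, dN, dM, DD, DN, raDr, raDl, raNr, raNl, raA, mulrDl, mulrDr, mulrN, mulNr, mulrA, opprK) in H4.
rewrite ?(fE, dD, dN, dM, DD, DN, raDr, raDl, raNr, raNl, raA, mulrDl, mulrDr, mulrN, mulNr, mulrA, opprK).
move/eqP: H1; rewrite -subr_eq0 => /eqP H1.
move/eqP: H2; rewrite -subr_eq0 => /eqP H2.
move/eqP: H3; rewrite -subr_eq0 => /eqP H3.
move/eqP: H4; rewrite -subr_eq0 => /eqP H4.
match type of H1 with ?e1 = 0 => match type of H2 with ?e2 = 0 =>
match type of H3 with ?e3 = 0 => match type of H4 with ?e4 = 0 =>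
  transitivity (e1 + e4 - e2 - e3); [zm | by rewrite H1 H2 H3 H4 !subr0 addr0] end end end end.
Qed.
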